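(* Let $\Lambda=(\mathcal{L}\subset\mathbb{R}^s,\mathbb{R}^n)$ be a generic cut-and-project scheme with associated matrix $L$ and with self-similarity $A\in\mathbb{R}^{n\times n}$, and let $B\in\mathbb{R}^{(s-n)\times(s-n)}$, $C\in\mathbb{Z}^{s\times s}$ satisfy $\begin{pmatrix}A&O\\O&B\end{pmatrix}L=LC$. Then $\mu_{A,\mathbb{Q}}=\mu_{B,\mathbb{Q}}=\mu_{C,\mathbb{Q}}=\mu_C$. In particular, either $A,B,C$ are all non-singular or all singular. Moreover, $A,B,C$ are either all diagonalizable over $\mathbb{C}$ or all non-diagonalizable over $\mathbb{C}$.
   Context: For a square matrix $T$, $\mu_T$ is its minimal polynomial (monic polynomial in $\mathbb{C}[X]$ of smallest degree with $\mu_T(T)=O$), and, when the eigenvalues of $T$ are algebraic, $\mu_{T,\mathbb{Q}}$ is the monic polynomial in $\mathbb{Q}[X]$ of smallest degree with $\mu_{T,\mathbb{Q}}(T)=O$. A lattice $\mathcal{L}\subset\mathbb{R}^s$ is $\{L\mathbf{r}:\mathbf{r}\in\mathbb{Z}^s\}$ for a non-singular $L\in\mathbb{R}^{s\times s}$. For $1\le n<s$, the scheme $(\mathcal{L}\subset\mathbb{R}^s,\mathbb{R}^n)$ has projections $\pi_\parallel(\mathbf{x})=(x_1,\dots,x_n)^\top$, $\pi_\perp(\mathbf{x})=(x_{n+1},\dots,x_s)^\top$; it is generic if $\pi_\parallel|_{\mathcal{L}}$ and $\pi_\perp|_{\mathcal{L}}$ are injective and $\pi_\perp(\mathcal{L})$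 is dense in $\mathbb{R}^{s-n}$. $A$ is a self-similarity of it if $A\pi_\parallel(\mathcal{L})\subset\pi_\parallel(\mathcal{L})$ and there exist $C\in\mathbb{Z}^{s\times s}$, $B$ real with $\begin{pmatrix}A&O\\O&B\end{pmatrix}L=LC$. *)

(* Defs.v *)
From HB Require Import structures.
From mathcomp Require Import all_boot all_order all_algebra.
From mathcomp Require Import reals.
From mathcomp.real_closed Require Import complex.
Set Implicit Arguments. Unset Strict Implicit. Unset Printing Implicit Defensive.
Import Order.TTheory GRing.Theory Num.Theory.
Local Open Scope ring_scope.

(* Conventions: the ambient space is R^s with s = n + m, m = s - n;
   vectors are column vectors 'cV[R]_(n + m).  pi_par = usubmx (first n
   coordinates), pi_perp = dsubmx (last m coordinates). *)

Definition intmx (R : realType) (k l : nat) (M : 'M[int]_(k, l)) : 'M[R]_(k, l) :=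
  map_mx (fun z : int => z%:~R) M.

Definition in_lattice (R : realType) (s : nat) (L : 'M[R]_s) (x : 'cV[R]_s) : Prop :=
  exists r : 'cV[int]_s, x = L *m intmx R r.

Definition is_lattice_matrix (R : realType) (s : nat) (L : 'M[R]_s) : Prop :=
  L \in unitmx.

Definition generic_cps (R : realType) (n m : nat) (L : 'M[R]_(n + m)) : Prop :=
  [/\ ((1 <= n)%N /\ (1 <= m)%N), is_lattice_matrix L,
   (forall x y, in_lattice L x -> in_lattice L y -> (usubmx x : 'cV[R]_n) = usubmx y -> x = y),
   (forall x y, in_lattice L x -> in_lattice L y -> (dsubmx x : 'cV[R]_m) = dsubmx y -> x = y) &
   (forall (y : 'cV[R]_m) (eps : R), 0 < eps ->
      exists x, in_lattice L x /\ forall i, `|(dsubmx x : 'cV[R]_m) i 0 - y i 0| < eps)].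

Definition self_similarity (R : realType) (n m : nat) (L : 'M[R]_(n + m)) (A : 'M[R]_n) : Prop :=
  (forall x, in_lattice L x -> exists y, in_lattice L y /\
       A *m (usubmx x : 'cV[R]_n) = usubmx y) /\
  exists (C : 'M[int]_(n + m)) (B : 'M[R]_m),
    block_mx A 0 0 B *m L = L *m intmx R C.

Definition mx_evalQ (R : realType) (k : nat) (T : 'M[R]_k) (p : {poly rat}) : 'M[R]_k :=
  \sum_(i < size p) (ratr p`_i : R) *: (T ^+ i).

Definition minpoly_Q (R : realType) (k : nat) (T : 'M[R]_k) (p : {poly rat}) : Prop :=
  [/\ p \is monic, mx_evalQ T p = 0 &
      forall q : {poly rat}, q \is monic -> mx_evalQ T q = 0 -> (size p <= size q)%N].

Definition cmx (R : realType) (k : nat) (M : 'M[R]_k) : 'M[complex R]_k :=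
  map_mx (fun x : R => (x%:C)%C) M.

(* p is mu_T: the monic polynomial in F[X] of smallest degree with p(T) = O.
   (mathcomp's mxminpoly only applies to 'M_k.+1; this is the paper's definition.) *)
Definition mx_eval (F : fieldType) (k : nat) (T : 'M[F]_k) (p : {poly F}) : 'M[F]_k :=
  \sum_(i < size p) p`_i *: (T ^+ i).

Definition is_minpoly (F : fieldType) (k : nat) (T : 'M[F]_k) (p : {poly F}) : Prop :=
  [/\ p \is monic, mx_eval T p = 0 &
      forall q : {poly F}, q \is monic -> mx_eval T q = 0 -> (size p <= size q)%N].

(* Main.v *)
Require Import Defs.
From HB Require Import structures.
From mathcomp Require Import all_boot all_order all_algebra all_field.
From mathcomp Require Import reals.
From mathcomp.real_closed Require Import complex polyorder.
Import Order.TTheory GRing.Theory Num.Theory.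
Local Open Scope ring_scope.
Section Aux.
Variable R : realType.

Lemma horner_mx_sum (F : comNzRingType) k (T : 'M[F]_k.+1) (r : {poly F}) :
  horner_mx T r = \sum_(i < size r) r`_i *: T ^+ i.
Proof.
rewrite -{1}[r]coefK poly_def rmorph_sum /=; apply: eq_bigr => i _.
by rewrite linearZ /= rmorphXn /= horner_mx_X.
Qed.

Lemma evalQE k (T : 'M[R]_k.+1) q : mx_evalQ T q = horner_mx T (map_poly ratr q).
Proof.
rewrite horner_mx_sum size_map_poly /mx_evalQ; apply: eq_bigr => i _.
by rewrite coef_map.
Qed.

Lemma evalE (F : fieldType) k (T : 'M[F]_k.+1) q : mx_eval T q = horner_mx T q.
Proof. by rewrite horner_mx_sum. Qed.

Lemma block_exp n m (A : 'M[R]_n) (B : 'M[R]_m) i :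
  block_mx A 0 0 B ^+ i = block_mx (A ^+ i) 0 0 (B ^+ i).
Proof.
elim: i => [|i IH]; first by rewrite !expr0 -scalar_mx_block.
by rewrite !exprS IH -!mulmxE mulmx_block !mulmx0 !mul0mx !addr0 !add0r.
Qed.

Lemma evalQ_block n m (A : 'M[R]_n) (B : 'M[R]_m) q :
  mx_evalQ (block_mx A 0 0 B) q = block_mx (mx_evalQ A q) 0 0 (mx_evalQ B q).
Proof.
rewrite /mx_evalQ; elim: (size q) => [|s IH]; first by rewrite !big_ord0 block_mx0.
by rewrite !big_ord_recr /= IH block_exp scale_block_mx !scaler0 add_block_mx !addr0.
Qed.

Lemma evalQ_intertw k (X Y L : 'M[R]_k) q :
  X *m L = L *m Y -> mx_evalQ X q *m L = L *m mx_evalQ Y q.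
Proof.
move=> h; have hi i : X ^+ i *m L = L *m Y ^+ i.
  elim: i => [|i IH]; first by rewrite !expr0 !mulmxE mul1r mulr1.
  by rewrite !exprS -!mulmxE -mulmxA IH mulmxA h -mulmxA.
rewrite /mx_evalQ mulmx_suml mulmx_sumr; apply: eq_bigr => i _.
by rewrite -scalemxAl hi scalemxAr.
Qed.

Lemma evalQZ k (T : 'M[R]_k) c r : c != 0 ->
  mx_evalQ T (c *: r) = ratr c *: mx_evalQ T r.
Proof.
move=> c0; rewrite /mx_evalQ size_scale // scaler_sumr; apply: eq_bigr => i _.
by rewrite coefZ rmorphM scalerA.
Qed.

Lemma evalQZ0 k (T : 'M[R]_k) c r : c != 0 ->
  (mx_evalQ T (c *: r) = 0) <-> (mx_evalQ T r = 0).
Proof.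
move=> c0; rewrite evalQZ //; split => [h|->]; last by rewrite scaler0.
have c0' : (ratr c : R) != 0 by rewrite fmorph_eq0.
by rewrite -[mx_evalQ T r](scalerK c0') h scaler0.
Qed.

End Aux.
Section Lat.
Variable R : realType.

Lemma intmx0 k l : intmx R (0 : 'M[int]_(k, l)) = 0.
Proof. by apply/matrixP => i j; rewrite !mxE. Qed.

Lemma intmxM k l r (M : 'M[int]_(k, l)) (N : 'M[int]_(l, r)) :
  intmx R (M *m N) = intmx R M *m intmx R N.
Proof. exact: (map_mxM (intr : {rmorphism int -> R})). Qed.

Lemma lat_aux n m (L : 'M[R]_(n + m)) (Z : 'M[int]_(n + m)) :
  L \in unitmx ->
  (forall r : 'cV[int]_(n + m), L *m intmx R (Z *m r) = 0) -> Z = 0.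
Proof.
move=> Lu h; apply/matrixP => i j.
have := h (delta_mx j 0) => /(congr1 (mulmx (invmx L))).
rewrite mulKmx // mulmx0 -colE => /matrixP /(_ i 0).
by rewrite !mxE => /eqP; rewrite intr_eq0 => /eqP.
Qed.

Lemma usub_block0 n m l (Y : 'M[R]_m) (W : 'M[R]_(n + m, l)) :
  usubmx (block_mx (0 : 'M_n) 0 0 Y *m W) = 0.
Proof.
by rewrite -[W]vsubmxK mul_block_col col_mxKu !mul0mx addr0.
Qed.

Lemma dsub_block0 n m l (X : 'M[R]_n) (W : 'M[R]_(n + m, l)) :
  dsubmx (block_mx X 0 0 (0 : 'M_m) *m W) = 0.
Proof.
by rewrite -[W]vsubmxK mul_block_col col_mxKd !mul0mx addr0.
Qed.

Lemma lat_u n m (L : 'M[R]_(n + m)) (X : 'M[R]_n) (Y : 'M[R]_m) (Z : 'M[int]_(n + m)) :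
  generic_cps L -> block_mx X 0 0 Y *m L = L *m intmx R Z -> X = 0 -> Z = 0.
Proof.
case=> _ Lu injU _ _ hZ X0; apply: (@lat_aux _ _ L) => // r.
have l0 : in_lattice L 0 by exists 0; rewrite intmx0 mulmx0.
apply: (injU _ _ _ l0); first by exists (Z *m r).
rewrite intmxM mulmxA -hZ X0 -mulmxA -[L *m _]vsubmxK mul_block_col col_mxKu.
by apply/matrixP => i j; rewrite !mxE !big1 ?addr0 // => k _; rewrite !mxE mul0r.
Qed.

Lemma lat_d n m (L : 'M[R]_(n + m)) (X : 'M[R]_n) (Y : 'M[R]_m) (Z : 'M[int]_(n + m)) :
  generic_cps L -> block_mx X 0 0 Y *m L = L *m intmx R Z -> Y = 0 -> Z = 0.
Proof.
case=> _ Lu _ injD _ hZ Y0; apply: (@lat_aux _ _ L) => // r.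
have l0 : in_lattice L 0 by exists 0; rewrite intmx0 mulmx0.
apply: (injD _ _ _ l0); first by exists (Z *m r).
rewrite intmxM mulmxA -hZ Y0 -mulmxA -[L *m _]vsubmxK mul_block_col col_mxKd.
by apply/matrixP => i j; rewrite !mxE !big1 ?addr0 // => k _; rewrite !mxE mul0r.
Qed.

Lemma lat_c n m (L : 'M[R]_(n + m)) (X : 'M[R]_n) (Y : 'M[R]_m) (Z : 'M[R]_(n + m)) :
  L \in unitmx -> block_mx X 0 0 Y *m L = L *m Z -> Z = 0 -> X = 0 /\ Y = 0.
Proof.
move=> Lu hZ Z0; move: hZ; rewrite Z0 mulmx0 => /(congr1 (mulmx^~ (invmx L))).
rewrite mulmxK // mul0mx -(block_mx0 _ n m n m) => /eq_block_mx [-> _ _ ->].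
by [].
Qed.

End Lat.
Section Core.
Variable R : realType.

Lemma core n m (L : 'M[R]_(n.+1 + m.+1)) (A : 'M[R]_n.+1) (B : 'M[R]_m.+1)
    (C : 'M[int]_(n.+1 + m.+1)) :
  generic_cps L -> block_mx A 0 0 B *m L = L *m intmx R C ->
  forall q, [/\ (mx_evalQ A q = 0 <-> mxminpoly (map_mx intr C : 'M[rat]_(n.+1 + m.+1)) %| q),
             (mx_evalQ B q = 0 <-> mxminpoly (map_mx intr C : 'M[rat]_(n.+1 + m.+1)) %| q) &
             (mx_evalQ (intmx R C) q = 0 <-> mxminpoly (map_mx intr C : 'M[rat]_(n.+1 + m.+1)) %| q)].
Proof.
move=> G E q; set CQ := map_mx intr C; set p := mxminpoly CQ.
have Lu : L \in unitmx by case: G.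
have h1 : intmx R C = map_mx ratr CQ.
  by apply/matrixP => i j; rewrite !mxE ratr_int.
have h2 r : mx_evalQ (intmx R C) r = map_mx ratr (horner_mx CQ r).
  by rewrite evalQE h1 map_horner_mx.
have h3 r : mx_evalQ (intmx R C) r = 0 <-> p %| r.
  rewrite h2; split => [h | /mxminpoly_minP ->].
    apply/mxminpoly_minP; apply/matrixP => i j; move/matrixP: h => /(_ i j).
    by rewrite !mxE => /eqP; rewrite fmorph_eq0 => /eqP.
  by apply/matrixP => i j; rewrite !mxE rmorph0.
have h4 (q0 : {poly int}) :
    mx_evalQ (intmx R C) (map_poly intr q0) = intmx R (horner_mx C q0).
  rewrite h2 /CQ -(map_horner_mx (intr : {rmorphism int -> rat})).
  by apply/matrixP => i j; rewrite !mxE ratr_int.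
have hE r : block_mx (mx_evalQ A r) 0 0 (mx_evalQ B r) *m L
            = L *m mx_evalQ (intmx R C) r.
  by rewrite -evalQ_block; apply: evalQ_intertw.
have key (q0 : {poly int}) :
  [/\ mx_evalQ A (map_poly intr q0) = 0 <-> p %| map_poly intr q0,
      mx_evalQ B (map_poly intr q0) = 0 <-> p %| map_poly intr q0 &
      mx_evalQ (intmx R C) (map_poly intr q0) = 0 <-> p %| map_poly intr q0].
  have E' := hE (map_poly intr q0); rewrite h4 in E'.
  split => //.
  - split => [hA | /h3 hc].
      by apply/h3; rewrite h4 (@lat_u R _ _ _ _ _ _ G E' hA) intmx0.
    by rewrite h4 in hc; have [] := @lat_c R _ _ _ _ _ _ Lu E' hc.
  - split => [hB | /h3 hc].
      by apply/h3; rewrite h4 (@lat_d R _ _ _ _ _ _ G E' hB) intmx0.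
    by rewrite h4 in hc; have [] := @lat_c R _ _ _ _ _ _ Lu E' hc.
have [q0 [a a0 ->]] := rat_poly_scale q.
have c0 : (a%:~R^-1 : rat) != 0 by rewrite invr_eq0 intr_eq0.
have [k1 k2 k3] := key q0.
by split; rewrite dvdpZr //; [rewrite -k1 | rewrite -k2 | rewrite -k3]; exact: evalQZ0.
Qed.

End Core.
Section Minp.
Variable R : realType.

Lemma minQ k (T : 'M[R]_k) p : p \is monic ->
  (forall q, mx_evalQ T q = 0 <-> p %| q) -> minpoly_Q T p.
Proof.
move=> pm h; split => //; first by apply/h; rewrite dvdpp.
move=> q qm /h pq; apply: dvdp_leq => //; exact: monic_neq0.
Qed.

Lemma is_minpoly_mx (F : fieldType) k (T : 'M[F]_k.+1) : is_minpoly T (mxminpoly T).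
Proof.
split; [exact: mxminpoly_monic | by rewrite evalE mx_root_minpoly |].
move=> q qm; rewrite evalE => /mxminpoly_min; apply: dvdp_leq; exact: monic_neq0.
Qed.

Lemma unitQ k (T : 'M[R]_k.+1) p : p \is monic ->
  (forall q, mx_evalQ T q = 0 <-> p %| q) -> (T \in unitmx) = ~~ root p 0.
Proof.
move=> pm h; have p0 : p != 0 := monic_neq0 pm.
apply/idP/idP.
- move=> Tu; apply/negP => rp.
  have dX : 'X %| p by rewrite -(subr0 'X) -polyC0 dvdp_XsubCl.
  set q := p %/ 'X; have Ep : p = q * 'X by rewrite divpK.
  have q0 : q != 0 by apply: contraNneq p0 => q0; rewrite Ep q0 mul0r.
  have : mx_evalQ T q = 0.
    have := proj2 (h p) (dvdpp p); rewrite !evalQE {1}Ep rmorphM /= map_polyX.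
    rewrite rmorphM /= horner_mx_X => H.
    by rewrite -[LHS](mulmxK Tu) mulmxE H mul0r.
  move/h => pq; have := dvdp_leq q0 pq.
  by rewrite {1}Ep size_mulX // ltnn.
- apply: contraR => nTu.
  have : \det T == 0 by rewrite unitmxE unitfE negbK in nTu.
  move/det0P => [v v0 vT].
  have hv (r : {poly R}) : v *m horner_mx T r = r.[0] *: v.
    elim/poly_ind: r => [|r c IH]; first by rewrite rmorph0 mulmx0 horner0 scale0r.
    rewrite rmorphD rmorphM /= horner_mx_X horner_mx_C mulmxDr -mulmxE mulmxA IH.
    by rewrite -scalemxAl vT scaler0 add0r mul_mx_scalar hornerMXaddC mulr0 add0r.
  have := hv (map_poly ratr p); rewrite -evalQE (proj2 (h p) (dvdpp p)) mulmx0.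
  rewrite horner_coef0 coef_map => /esym/eqP; rewrite scaler_eq0 (negPf v0) orbF.
  by rewrite fmorph_eq0 /root horner_coef0.
Qed.

End Minp.
Section Diag.
Variable R : realType.

Lemma diagQ k (T : 'M[R]_k.+1) p : p \is monic ->
  (forall q, mx_evalQ T q = 0 <-> p %| q) ->
  diagonalizable (cmx T) <-> separable_poly p.
Proof.
move=> pm h; have p0 : p != 0 := monic_neq0 pm.
set mu := mxminpoly (cmx T).
have hc (q : {poly rat}) : mu %| map_poly (ratr : rat -> complex R) q <-> p %| q.
  rewrite -h.
  have e : horner_mx (cmx T) (map_poly ratr q) = cmx (mx_evalQ T q).
    rewrite evalQE /cmx (map_horner_mx (real_complex R)) -map_poly_comp.
    by congr horner_mx; apply: eq_map_poly => x /=; rewrite fmorph_rat.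
  rewrite /mu dvd_mxminpoly e; split => [/eqP H | ->].
    apply/matrixP => i j; move/matrixP: H => /(_ i j); rewrite !mxE => /eqP.
    by rewrite fmorph_eq0 => /eqP.
  by apply/eqP/matrixP => i j; rewrite !mxE rmorph0.
have mum : mu \is monic := mxminpoly_monic _.
have [rs Ers] := closed_field_poly_normal mu.
rewrite (monicP mum) scale1r in Ers.
have sepmu : separable_poly mu <-> diagonalizable (cmx T).
  split.
  - move=> s; apply/diagonalizableP; exists rs; last by rewrite -Ers dvdpp.
    by rewrite -separable_prod_XsubC -Ers.
  - move/diagonalizableP => [rs' u d]; apply: (dvdp_separable d).
    by rewrite separable_prod_XsubC.
rewrite -sepmu; split.
- move=> smu; have urs : uniq rs by rewrite -separable_prod_XsubC -Ers.
  apply/separable_polyP; split; last first.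
    move=> u _ su; rewrite -size_poly_eq0 polyorder.size_deriv.
    by case: (size u) su => [|[|s]].
  apply/poly_square_freeP => u su; apply/negP => hu2.
  set b := p %/ u ^+ 2; have Ep : p = b * u ^+ 2 by rewrite divpK.
  have bu0 : b * u != 0.
    by apply: contraNneq p0 => bu0; rewrite Ep expr2 mulrA bu0 mul0r.
  have u0 : u != 0 by apply: contraNneq bu0 => ->; rewrite mulr0.
  have u1 : (1 < size u)%N by rewrite ltn_neqAle eq_sym su /= size_poly_gt0.
  have : p %| b * u.
    apply/hc; rewrite Ers; apply: uniq_roots_dvdp; last by rewrite uniq_rootsE.
    apply/allP => r rin.
    have : root (map_poly ratr p) r.
      have : mu %| map_poly ratr p by apply/hc; exact: dvdpp.
      rewrite Ers => d; rewrite -dvdp_XsubCl; apply: dvdp_trans d.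
      by rewrite dvdp_XsubCl root_prod_XsubC.
    rewrite Ep expr2 !rmorphM /= !rootM.
    by case/orP => [->|/orP [] ->]; rewrite ?orbT.
  move/(dvdp_leq bu0); rewrite Ep expr2 mulrA size_mul //.
  by case: (size u) u1 => [|[|s]] // _; rewrite addnS /= -{2}[size _]addn0 leq_add2l.
- move=> sp; apply: (@dvdp_separable _ (map_poly ratr p)).
    by apply/hc; exact: dvdpp.
  by rewrite separable_map.
Qed.

End Diag.
Theorem proposition4 (R : realType) (n m : nat) (L : 'M[R]_(n + m))
    (A : 'M[R]_n) (B : 'M[R]_m) (C : 'M[int]_(n + m)) :
  generic_cps L -> self_similarity L A ->
  block_mx A 0 0 B *m L = L *m intmx R C ->
  (exists p : {poly rat},
     [/\ minpoly_Q A p, minpoly_Q B p, minpoly_Q (intmx R C) p &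
         is_minpoly (cmx (intmx R C)) (map_poly (fun q : rat => ratr q : complex R) p)])
  /\ ((A \in unitmx) = (B \in unitmx) /\ (B \in unitmx) = (intmx R C \in unitmx))
  /\ ((diagonalizable (cmx A) <-> diagonalizable (cmx B))
      /\ (diagonalizable (cmx B) <-> diagonalizable (cmx (intmx R C)))).
Proof.
move=> G S E.
have [[n1 m1] _ _ _ _] := G.
case: n n1 L A C G S E => [//|n] _ L A C G S E.
case: m m1 L B C G S E => [//|m] _ L B C G S E.
have K := @core R n m L A B C G E.
set p := mxminpoly (map_mx intr C) in K.
have pm : p \is monic := mxminpoly_monic _.
have aA q : mx_evalQ A q = 0 <-> p %| q by case: (K q).
have aB q : mx_evalQ B q = 0 <-> p %| q by case: (K q).
have aC q : mx_evalQ (intmx R C) q = 0 <-> p %| q by case: (K q).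
split; last split.
- exists p; split.
  + exact: (@minQ R _ A p pm aA).
  + exact: (@minQ R _ B p pm aB).
  + exact: (@minQ R _ (intmx R C) p pm aC).
  + have -> : cmx (intmx R C) =
        map_mx (ratr : {rmorphism rat -> complex R}) (map_mx intr C).
      by apply/matrixP => i j; rewrite !mxE !rmorph_int.
    rewrite /p -mxminpoly_map; exact: is_minpoly_mx.
- by rewrite (@unitQ R _ A p pm aA) (@unitQ R _ B p pm aB) (@unitQ R _ (intmx R C) p pm aC).
- have dA := @diagQ R _ A p pm aA.
  have dB := @diagQ R _ B p pm aB.
  have dC := @diagQ R _ (intmx R C) p pm aC.
  by rewrite dA dB dC.
Qed.
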